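(* Let $X_1,X_2,\dots$ be i.i.d. nonnegative random variables with regularly varying tail of index $\gamma\in(0,1)$, i.e. $P(X_1>t)=L(t)t^{-\gamma}$ with $L$ slowly varying at infinity. Then for every $p\in(0,1)$ and every $\varepsilon>0$ there exists $C>0$ such that for all $n\in\mathbb N$, $$E\Big[\Big(\sum_{j=1}^n\Big(\frac{X_j}{n^{1/\gamma}}\wedge n^{-p/\gamma}\Big)\Big)^2\Big]\le Cn^{-p(\frac1\gamma-1)+\varepsilon}.$$
   Context: A function $L:\mathbb R_+\to\mathbb R_+$ is slowly varying at infinity if $L(at)/L(t)\to1$ as $t\to\infty$ for every $a>0$. *)

(* Defs.v *)
From HB Require Import structures.
From mathcomp Require Import all_boot all_order all_algebra.
From mathcomp Require Import all_classical all_reals all_analysis.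
Set Implicit Arguments. Unset Strict Implicit. Unset Printing Implicit Defensive.
Import Order.TTheory GRing.Theory Num.Theory.
Import numFieldNormedType.Exports.
Local Open Scope classical_set_scope.
Local Open Scope ring_scope.

Definition slowly_varying (R : realType) (L : R -> R) : Prop :=
  (forall t, 0 < t -> 0 < L t) /\
  (forall a, 0 < a -> (fun t => L (a * t) / L t) @ +oo --> (1 : R)).

Definition mutually_independent d (T : measurableType d) (R : realType)
  (P : probability T R) (X : nat -> T -> R) : Prop :=
  forall (B : nat -> set R), (forall i, measurable (B i)) ->
  forall s : seq nat, uniq s ->
    P (\big[setI/setT]_(i <- s) (X i @^-1` B i)) =
    (\prod_(i <- s) P (X i @^-1` B i))%E.

Definition identically_distributed d (T : measurableType d) (R : realType)
  (P : probability T R) (X : nat -> T -> R) : Prop :=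
  forall n (B : set R), measurable B -> P (X n @^-1` B) = P (X 0%N @^-1` B).

(* Main.v *)
Require Import Defs.
From HB Require Import structures.
From mathcomp Require Import all_boot all_order all_algebra.
From mathcomp Require Import all_classical all_reals all_analysis.
From mathcomp Require Import measurable_realfun.
From mathcomp Require Import ring lra.
Import Order.TTheory GRing.Theory Num.Theory.
Import numFieldNormedType.Exports.
Local Open Scope classical_set_scope.
Local Open Scope ring_scope.
Lemma tail_bound (R : realType) (L F : R -> R) (g dl : R) :
  slowly_varying L -> 0 < dl < g ->
  (forall t, 0 < t -> 0 <= F t <= 1) ->
  (forall t, 0 < t -> F t = L t * t `^ (- g)) ->
  exists C, 0 < C /\ forall t, 0 < t -> F t <= C * t `^ (- (g - dl)).
Proof.
move=> [Lpos HL] /andP[dl0 dlg] F01 FL.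
have hLt t : 0 < t -> L t = F t * t `^ g.
  move=> t0; rewrite FL // -mulrA powRN mulVf ?mulr1 //.
  by rewrite gt_eqF // powR_gt0.
have h2 : 1 < 2 `^ dl.
  have := @gt0_ltr_powR R dl dl0 1 2; rewrite powR1; apply => //.
  by rewrite nnegrE. by rewrite nnegrE. lra.
have two0 : (0:R) < 2 by [].
have := @cvgr_lt R _ _ _ _ _ (HL 2 two0) _ h2 => -[t1 [_ Ht1]].
set t0 := Num.max (t1 + 1) 1.
have t0ge1 : 1 <= t0 by rewrite /t0 le_max lexx orbT.
have t0gt1 : t1 < t0 by rewrite /t0 lt_max; apply/orP; left; lra.
have t0pos : 0 < t0 by lra.
have Hs t : t0 <= t -> L (2 * t) <= 2 `^ dl * L t.
  move=> tt0; have := Ht1 t ltac:(lra) => /=.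
  by rewrite ltr_pdivrMr ?Lpos //; [move/ltW | lra].
set K0 := (2 * t0) `^ g / t0 `^ dl.
have K0pos : 0 < K0 by rewrite divr_gt0 // powR_gt0 // mulr_gt0.
have base t : t0 <= t <= 2 * t0 -> L t <= K0 * t `^ dl.
  move=> /andP[h1 h2']; rewrite hLt; last lra.
  have Ft := F01 t ltac:(lra).
  apply: (@le_trans _ _ (t `^ g)).
    rewrite -[X in _ <= X]mul1r ler_wpM2r ?powR_ge0 //; by case/andP: Ft.
  apply: (@le_trans _ _ ((2 * t0) `^ g)).
    by apply: ge0_ler_powR => //; rewrite ?nnegrE; lra.
  rewrite /K0 -mulrA ler_peMr ?powR_ge0 // ler_pdivlMl ?powR_gt0 // mulr1.
  by apply: ge0_ler_powR => //; rewrite ?nnegrE; lra.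
have ind m : forall t, t0 <= t <= (m%:R + 2) * t0 -> L t <= K0 * t `^ dl.
  elim: m => [|m IH] t /andP[h1 h2']; first by apply: base; rewrite h1; lra.
  have [ht|ht] := leP t (2 * t0); first by apply: base; rewrite h1.
  have -> : t = 2 * (t / 2) by field.
  apply: (le_trans (Hs _ _)); first lra.
  rewrite powRM ?(ler0n, divr_ge0) //; last lra.
  rewrite mulrCA ler_pM2l ?powR_gt0 //; apply: IH.
  apply/andP; split; first lra.
  rewrite -natr1 in h2'; have : 0 <= m%:R :> R by [].
  move=> hm; nra.
have big t : t0 <= t -> L t <= K0 * t `^ dl.
  move=> h; apply: (ind (Num.trunc (t / t0))).
  rewrite h /=; have := truncnS_gt (t / t0); rewrite -natr1.
  by rewrite ltr_pdivrMr //; lra.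
exists (K0 + t0 `^ (g - dl)); split; first by rewrite ltr_wpDr ?powR_ge0.
move=> t tpos.
have tg : t `^ (- (g - dl)) = t `^ dl * t `^ (- g).
  have e : - (g - dl) = dl + - g by ring.
  rewrite e powRD //; apply/implyP => _; by rewrite gt_eqF.
have [ht|ht] := leP t0 t.
  rewrite FL // tg mulrDl; apply: ler_wpDr.
    by rewrite !mulr_ge0 ?powR_ge0.
  by rewrite mulrA ler_wpM2r ?powR_ge0 // big.
have := F01 t tpos => /andP[_ F1]; apply: (le_trans F1).
have h1 : 1 <= t0 `^ (g - dl) * t `^ (- (g - dl)).
  rewrite powRN -[X in X <= _](@mulfV _ (t0 `^ (g - dl))) ?gt_eqF ?powR_gt0 //.
  rewrite ler_wpM2l ?powR_ge0 // lef_pV2 ?posrE ?powR_gt0 //.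
  by apply: ge0_ler_powR; rewrite ?nnegrE; lra.
apply: (le_trans h1); rewrite ler_wpM2r ?powR_ge0 // lerDr; exact: ltW.
Qed.

Lemma ind_bool d (T : measurableType d) (R : realType) (f : T -> R) (s : R) w :
  \1_(f @^-1` [set y | s < y]) w = ((s < f w)%R)%:R :> R.
Proof.
rewrite indicE.
have -> : (w \in f @^-1` [set y | s < y]) = (s < f w).
  by apply/idP/idP; rewrite inE.
by [].
Qed.

Lemma min_div (R : realType) (x M a : R) : 0 < a ->
  Num.min (x / a) (M / a) = Num.min x M / a.
Proof.
move=> a0; have ai : 0 < a^-1 by rewrite invr_gt0.
have [h|h] := leP x M.
  by apply/min_idPl; rewrite ler_pM2r.
by apply/min_idPr; rewrite ler_pM2r //; exact: ltW.
Qed.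

Lemma geom_le (R : realType) (q : R) K : 0 <= q < 1 ->
  \sum_(k < K) q ^+ k <= (1 - q)^-1.
Proof.
move=> /andP[q0 q1].
have h : \sum_(k < K) q ^+ k = (1 - q ^+ K) / (1 - q).
  have := subrX1 q K; move=> e.
  apply: (@mulIf _ (1 - q)); first by rewrite subr_eq0 gt_eqF.
  rewrite mulfVK ?subr_eq0 ?gt_eqF // mulrC.
  have -> : 1 - q ^+ K = - (q ^+ K - 1) by ring.
  by rewrite e; ring.
rewrite h -[X in _ <= X]mul1r ler_pM2r ?invr_gt0 ?subr_gt0 // gerBl exprn_ge0 //.
Qed.
Lemma dyadic (R : realType) (r x : R) (K : nat) : 0 < r < 1 -> 0 <= x ->
  forall M, 0 <= M ->
  Num.min x M <= \sum_(k < K) (M * r ^+ k) * ((M * r ^+ k.+1 < x)%R)%:R + M * r ^+ K.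
Proof.
move=> /andP[r0 r1] x0; elim: K => [|K IH] M M0.
  by rewrite big_ord0 add0r expr0 mulr1 ge_min lexx orbT.
have -> : \sum_(k < K.+1) M * r^+k * ((M * r^+k.+1 < x)%R)%:R + M * r^+K.+1 =
  M * ((M * r < x)%R)%:R + (\sum_(k<K) (M*r) * r^+k * (((M*r) * r^+k.+1 < x)%R)%:R
    + (M*r) * r^+K).
  rewrite big_ord_recl expr0 mulr1 expr1 -addrA; congr (_ + (_ + _)).
    by apply: eq_bigr => k _; rewrite /bump /= !exprS !mulrA.
  by rewrite exprS mulrA.
have Mr0 : 0 <= M * r by rewrite mulr_ge0 // ltW.
have IH' := IH _ Mr0.
have rest0 : 0 <= \sum_(i < K) M * r * r ^+ i * ((M * r * r ^+ i.+1 < x)%R)%:R + M * r * r ^+ K.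
  apply: addr_ge0; last by rewrite !mulr_ge0 ?exprn_ge0 ?(ltW r0).
  by apply: sumr_ge0 => i _; rewrite !mulr_ge0 ?exprn_ge0 ?(ltW r0).
have [hx|hx] := ltP (M * r) x.
  rewrite mulr1 -[X in X <= _]addr0; apply: lerD => //.
  by rewrite ge_min lexx orbT.
rewrite mulr0 add0r; apply: le_trans IH'.
have -> : Num.min x M = x.
  by apply/min_idPl; apply: (le_trans hx); rewrite ler_piMr // (ltW r1).
have -> : Num.min x (M * r) = x by apply/min_idPl.
by [].
Qed.

Lemma Y_le_Z (R : realType) (x a M r : R) (K : nat) : 0 < a -> 0 <= M -> 0 < r < 1 -> 0 <= x ->
  Num.min x M / a <= \sum_(k < K.+1) (M * r ^+ k / a) *
     (((if (k < K)%N then M * r ^+ k.+1 else -1) < x)%R)%:R.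
Proof.
move=> a0 M0 r01 x0.
rewrite big_ord_recr /= ltnn.
have hx : (-1 < x)%R by lra.
rewrite hx mulr1.
under eq_bigr => k _ do rewrite /= (ltn_ord k).
have -> : \sum_(i < K) M * r ^+ i / a * ((M * r ^+ i.+1 < x)%R)%:R + M * r ^+ K / a =
  (\sum_(i < K) M * r ^+ i * ((M * r ^+ i.+1 < x)%R)%:R + M * r ^+ K) / a.
  by rewrite mulrDl mulr_suml; congr (_ + _); apply: eq_bigr => k _; rewrite mulrAC.
by rewrite ler_pM2r ?invr_gt0 //; apply: dyadic.
Qed.
Section prob.
Context d (T : measurableType d) (R : realType) (P : probability T R).

Lemma Pfin {A : set T} : measurable A -> P A = (fine (P A))%:E.
Proof. by move=> mA; rewrite fineK // fin_num_measure. Qed.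

Lemma pr_ge0 (A : set T) : 0 <= fine (P A).
Proof. by apply: fine_ge0. Qed.

Lemma pr_le1 {A : set T} : measurable A -> fine (P A) <= 1.
Proof.
move=> mA; have := probability_measure.probability_le1 P mA; rewrite (Pfin mA) lee_fin //.
Qed.

Lemma Eind_sum (I : finType) (w : I -> R) (A : I -> set T) :
  (forall k, 0 <= w k) -> (forall k, measurable (A k)) ->
  ('E_P[(fun x => \sum_k w k * \1_(A k) x)%R])%E = (\sum_k w k * fine (P (A k)))%:E.
Proof.
move=> w0 mA; rewrite unlock /=.
under eq_integral do rewrite -sumEFin.
rewrite ge0_integral_sum //=; last 2 first.
- move=> k; apply/measurable_EFinP.
  apply: measurable_funM; first exact: measurable_cst.
  exact: measurable_indic.
- by move=> k x _; rewrite lee_fin mulr_ge0 // indic_ge0.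
rewrite -sumEFin; apply: eq_bigr => k _.
under eq_integral do rewrite EFinM.
rewrite ge0_integralZl_EFin //; last first.
  by apply/measurable_EFinP; exact: measurable_indic.
by rewrite integral_indic // setIT EFinM fineK ?fin_num_measure.
Qed.

Lemma Eind_prod (I J : finType) (w : I -> R) (A : I -> set T)
   (v : J -> R) (B : J -> set T) :
  (forall k, 0 <= w k) -> (forall k, measurable (A k)) ->
  (forall k, 0 <= v k) -> (forall k, measurable (B k)) ->
  (forall k l, P (A k `&` B l) = (P (A k) * P (B l))%E) ->
  ('E_P[(fun x => (\sum_k w k * \1_(A k) x) * (\sum_l v l * \1_(B l) x))%R])%E =
  ((\sum_k w k * fine (P (A k))) * (\sum_l v l * fine (P (B l))))%:E.
Proof.
move=> w0 mA v0 mB ind.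
have -> : (fun x => (\sum_k w k * \1_(A k) x) * (\sum_l v l * \1_(B l) x)) =
  (fun x => \sum_(p : I * J) (w p.1 * v p.2) * \1_(A p.1 `&` B p.2) x).
  apply/funext => x; rewrite big_distrlr /= pair_big /=.
  by apply: eq_bigr => -[k l] _ /=; rewrite indicI /=; ring.
rewrite Eind_sum //; last 2 first.
- by move=> p; rewrite mulr_ge0.
- by move=> p; apply: measurableI.
congr EFin; rewrite big_distrlr /= pair_big /=; apply: eq_bigr => -[k l] _ /=.
rewrite ind fineM ?fin_num_measure //; ring.
Qed.
End prob.

Section main.
Context d (T : measurableType d) (R : realType) (P : probability T R)
  (X : nat -> {RV P >-> R}).

Definition Zf (K : nat) (c s : nat -> R) (j : nat) (w : T) : R :=
  \sum_(k < K.+1) c k * \1_(X j @^-1` [set y | s k < y]) w.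

Lemma mset j s : measurable (X j @^-1` [set y : R | s < y]).
Proof.
have -> : [set y : R | s < y] = `]s, +oo[%classic.
  by apply/seteqP; split => y /=; rewrite in_itv /= andbT.
exact: measurable_funPTI.
Qed.

Lemma mset' s : measurable [set y : R | s < y].
Proof.
have -> : [set y : R | s < y] = `]s, +oo[%classic.
  by apply/seteqP; split => y /=; rewrite in_itv /= andbT.
exact: measurable_itv.
Qed.

Lemma mZ K c s j : measurable_fun setT (Zf K c s j).
Proof.
apply: measurable_sum => k; apply: measurable_funM => //.
exact: measurable_indic (mset _ _).
Qed.

Lemma Z_ge0 K c s j w : (forall k, 0 <= c k) -> 0 <= Zf K c s j w.
Proof. by move=> c0; apply: sumr_ge0 => k _; rewrite mulr_ge0 // indic_ge0. Qed.

Lemma Z_le K c s j w : (forall k, 0 <= c k) -> Zf K c s j w <= \sum_(k < K.+1) c k.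
Proof.
move=> c0; apply: ler_sum => k _; apply: ler_piMr => //; rewrite indicE.
Qed.

Definition Uf K c s := \sum_(k < K.+1) c k * fine (P (X 0 @^-1` [set y | s k < y])).

Lemma prX j s : identically_distributed P (fun n => X n) ->
  P (X j @^-1` [set y | s < y]) = P (X 0 @^-1` [set y | s < y]).
Proof. by move=> hid; apply: hid; exact: mset'. Qed.

Lemma E_off K c s i j :
  mutually_independent P (fun n => X n) -> identically_distributed P (fun n => X n) ->
  i != j -> (forall k, 0 <= c k) ->
  ('E_P[(fun w => Zf K c s i w * Zf K c s j w)%R])%E = ((Uf K c s) ^+ 2)%:E.
Proof.
move=> hind hid ij c0; rewrite /Zf Eind_prod //; last 3 first.
- by move=> k; exact: mset.
- by move=> k; exact: mset.
- move=> k l.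
  have := hind (fun m => if m == i then [set y | s k < y] else [set y | s l < y])
    _ [:: i; j].
  rewrite !big_cons !big_nil setIT mule1 eqxx eq_sym (negbTE ij); apply.
    by move=> m; case: ifP => _; exact: mset'.
  by rewrite /= in_cons in_nil orbF andbT.
congr EFin; rewrite expr2 /Uf; congr (_ * _); apply: eq_bigr => k _;
  by rewrite prX.
Qed.

Lemma E_diag K c s i :
  identically_distributed P (fun n => X n) -> (forall k, 0 <= c k) ->
  ('E_P[(fun w => Zf K c s i w * Zf K c s i w)%R] <=
   ((\sum_(k < K.+1) c k) * Uf K c s)%:E)%E.
Proof.
move=> hid c0.
set B := \sum_(k < K.+1) c k.
have B0 : 0 <= B by apply: sumr_ge0.
have hE := @Eind_sum _ _ _ P _ (fun k : 'I_K.+1 => B * c k)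
   (fun k : 'I_K.+1 => X i @^-1` [set y | s k < y]).
have -> : (B * Uf K c s)%:E =
    ('E_P[(fun w => \sum_(k < K.+1) B * c k * \1_(X i @^-1` [set y | s k < y]) w)%R])%E.
  rewrite hE //; last by move=> k; exact: mset.
    congr EFin; rewrite /Uf mulr_sumr; apply: eq_bigr => k _.
    by rewrite prX // mulrA.
  by move=> k; rewrite mulr_ge0.
rewrite unlock; apply: ge0_le_integral => //.
- by move=> w _; rewrite lee_fin mulr_ge0 // Z_ge0.
- by apply/measurable_EFinP; apply: measurable_funM; exact: mZ.
- apply/measurable_EFinP; apply: measurable_sum => k; apply: measurable_funM => //.
  exact: measurable_indic (mset _ _).
move=> w _; rewrite lee_fin.
have -> : \sum_(k < K.+1) B * c k * \1_(X i @^-1` [set y | s k < y]) w = B * Zf K c s i w.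
  by rewrite /Zf mulr_sumr; apply: eq_bigr => k _; rewrite mulrA.
by rewrite ler_wpM2r ?Z_ge0 // Z_le.
Qed.

Lemma E_sum K c s (r : seq nat) : (forall k, 0 <= c k) ->
  ('E_P[(fun w => (\sum_(j <- r) Zf K c s j w) ^+ 2)%R])%E =
  (\sum_(i <- r) \sum_(j <- r) 'E_P[(fun w => Zf K c s i w * Zf K c s j w)%R])%E.
Proof.
move=> c0; rewrite unlock.
under eq_integral do rewrite expr2 big_distrlr /= -sumEFin.
rewrite ge0_integral_sum //; last 2 first.
- move=> i; apply/measurable_EFinP; apply: measurable_sum => j.
  by apply: measurable_funM; exact: mZ.
- by move=> i w _; rewrite lee_fin; apply: sumr_ge0 => j _; rewrite mulr_ge0 // Z_ge0.
apply: eq_bigr => i _.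
under eq_integral do rewrite -sumEFin.
rewrite ge0_integral_sum //.
- by move=> j; apply/measurable_EFinP; apply: measurable_funM; exact: mZ.
- by move=> j w _; rewrite lee_fin mulr_ge0 // Z_ge0.
Qed.
End main.

Lemma two_pow_lt2 (R : realType) (g : R) : 0 < g < 1 -> 2 `^ g < 2.
Proof.
move=> /andP[g0 g1].
have h1 : 1 < 2 `^ (1 - g).
  have := @gt0_ltr_powR R (1 - g) ltac:(lra) 1 2; rewrite powR1; apply => //.
  by rewrite nnegrE. by rewrite nnegrE. lra.
have e : 2 `^ g * 2 `^ (1 - g) = 2 :> R.
  rewrite -powRD; last by apply/implyP.
  by rewrite (_ : g + (1 - g) = 1) ?powRr1 //; ring.
have p0 : 0 < 2 `^ g :> R by rewrite powR_gt0.
nra.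
Qed.

Lemma rpow (R : realType) (g : R) m : ((2^-1) ^+ m) `^ (- g) = (2 `^ g) ^+ m.
Proof.
rewrite exprVn -powR_invn // -powRrM -powR_mulrn ?powR_ge0 // -powRrM.
by congr (_ `^ _); ring.
Qed.

Lemma sum_eval (R : realType) (n : nat) (x y : R) :
  \sum_(i <- index_iota 1 n.+1) \sum_(j <- index_iota 1 n.+1) ((i == j)%:R * x + y)
  = (x + y *+ n) *+ n.
Proof.
have -> : \sum_(i <- index_iota 1 n.+1) \sum_(j <- index_iota 1 n.+1) ((i == j)%:R * x + y)
  = \sum_(i <- index_iota 1 n.+1) (x + y *+ n).
  rewrite big_seq_cond [RHS]big_seq_cond; apply: eq_bigr => i /andP[hi _].
  rewrite big_split /= sumr_const_nat subn1 /=; congr (_ + _).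
  rewrite (bigD1_seq i) //= ?iota_uniq // eqxx mul1r big1 ?addr0 //.
  by move=> j ji; rewrite eq_sym (negbTE ji) mul0r.
by rewrite sumr_const_nat subn1.
Qed.

Lemma U_bound (R : realType) (a M C0 g : R) (K : nat) (pr : nat -> R) :
  0 < a -> 0 < M -> 0 < C0 -> 0 < g < 1 ->
  (2^-1) ^+ K <= M `^ (- g) ->
  (forall k, 0 <= pr k <= 1) ->
  (forall k, (k < K)%N -> pr k <= C0 * (M * (2^-1) ^+ k.+1) `^ (- g)) ->
  \sum_(k < K.+1) (M * (2^-1) ^+ k / a) * pr k <=
    (C0 * 2 `^ g / (1 - 2^-1 * 2 `^ g) + 1) * (M * M `^ (- g) / a).
Proof.
move=> a0 M0 C00 g01 hK pr01 hpr.
set r : R := 2^-1.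
set q := r * 2 `^ g.
have r0 : 0 < r by rewrite /r invr_gt0.
have q0 : 0 <= q by rewrite /q mulr_ge0 ?powR_ge0 // ltW.
have q1 : q < 1.
  have := @two_pow_lt2 R g g01; rewrite /q /r => h; rewrite -(@ltr_pM2l _ 2) //.
  by rewrite mulrA mulfV // mul1r mulr1.
have ai : 0 < a^-1 by rewrite invr_gt0.
set A0 := C0 * 2 `^ g * (M * M `^ (- g) / a).
rewrite big_ord_recr /=.
have h1 : \sum_(i < K) M * r ^+ i / a * pr i <= A0 * \sum_(i < K) q ^+ i.
  rewrite mulr_sumr; apply: ler_sum => i _.
  have := hpr i (ltn_ord i) => hi.
  apply: (le_trans (ler_wpM2l _ hi)).
    by rewrite !mulr_ge0 ?exprn_ge0 ?(ltW r0) ?(ltW M0) ?(ltW ai).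
  rewrite powRM ?exprn_ge0 ?(ltW r0) ?(ltW M0) // rpow /A0 /q exprMn exprS.
  rewrite le_eqVlt; apply/orP; left; apply/eqP; ring.
have h2 : M * r ^+ K / a * pr K <= M * M `^ (- g) / a.
  have := pr01 K => /andP[p0 p1].
  apply: (@le_trans _ _ (M * r ^+ K / a)).
    by rewrite -[X in _ <= X]mulr1 ler_wpM2l // !mulr_ge0 ?exprn_ge0 ?(ltW r0) ?(ltW M0) ?(ltW ai).
  by rewrite ler_pM2r // ler_pM2l.
have h3 : A0 * \sum_(i < K) q ^+ i <= A0 / (1 - q).
  rewrite ler_pM2l ?geom_le ?q0 //.
  by rewrite /A0 !mulr_gt0 ?powR_gt0.
have e : (C0 * 2 `^ g / (1 - r * 2 `^ g) + 1) * (M * M `^ (- g) / a) =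
  A0 / (1 - q) + M * M `^ (- g) / a by rewrite /A0 /q; ring.
rewrite e; apply: lerD => //; exact: le_trans h1 h3.
Qed.


Lemma aux1 (R : realType) (x E y : R) : 0 < y -> x <= E + y / 2 -> x <= E + y.
Proof. move=> *; lra. Qed.

Lemma aux2 (R : realType) (x E y : R) : x <= E + y / 2 -> E <= 0 -> x + x <= E + y.
Proof. move=> *; lra. Qed.

Theorem lemmaA3 (d : measure_display) (T : measurableType d) (R : realType)
  (P : probability T R) (X : nat -> {RV P >-> R}) (gamma : R) :
  0 < gamma < 1 ->
  mutually_independent P (fun n => X n) ->
  identically_distributed P (fun n => X n) ->
  (forall n w, 0 <= X n w) ->
  (exists L : R -> R, slowly_varying L /\
     forall t, 0 < t -> P [set w | t < X 0%N w] = (L t * t `^ (- gamma))%:E) ->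
  forall p eps : R, 0 < p < 1 -> 0 < eps ->
  exists C : R, 0 < C /\
    forall n : nat, (0 < n)%N ->
      ('E_P[fun w => ((\sum_(1 <= j < n.+1)
           Num.min (X j w / n%:R `^ (1 / gamma)) (n%:R `^ (- (p / gamma)))) ^+ 2)%R]
       <= (C * n%:R `^ (- (p * (1 / gamma - 1)) + eps))%:E)%E.
Proof.
move=> /andP[g0 g1] hind hid X0 [L [HL HP]] p eps /andP[p0 p1] eps0.
set dl := Num.min (gamma / 2) (eps * gamma / 2).
have dl0 : 0 < dl.
  by rewrite lt_min; apply/andP; split; rewrite ?divr_gt0 ?mulr_gt0.
have dlg2 : dl <= gamma / 2 by rewrite ge_min lexx.
have dle : dl <= eps * gamma / 2 by rewrite ge_min lexx orbT.
have dlg : dl < gamma by lra.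
set F := fun t => fine (P (X 0%N @^-1` [set y | t < y])).
have F01 : forall t, 0 < t -> 0 <= F t <= 1.
  by move=> t _; rewrite /F pr_ge0 pr_le1 //; exact: mset.
have FL : forall t, 0 < t -> F t = L t * t `^ (- gamma).
  by move=> t t0; rewrite /F; have := HP t t0; rewrite /preimage /= => ->.
have [C0 [C0pos HC]] := @tail_bound R L F gamma dl HL
   ltac:(by rewrite dl0 dlg) F01 FL.
set g' := gamma - dl in HC.
have g'01 : 0 < g' < 1 by rewrite /g'; apply/andP; split; lra.
have q1 : 2^-1 * 2 `^ g' < 1 :> R.
  have := @two_pow_lt2 R g' g'01 => h; rewrite -(@ltr_pM2l _ 2) //.
  by rewrite mulrA mulfV // mul1r mulr1.
set D := C0 * 2 `^ g' / (1 - 2^-1 * 2 `^ g') + 1.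
have D1 : 1 <= D.
  rewrite /D lerDr divr_ge0 // ?subr_ge0 ?(ltW q1) //.
  by rewrite mulr_ge0 ?powR_ge0 // ltW.
have D0 : 0 < D by lra.
exists (2 * D + D ^+ 2); split; first by rewrite addr_gt0 ?mulr_gt0 ?exprn_gt0.
move=> n n0.
set nr : R := n%:R.
have n1 : 1 <= nr by rewrite /nr ler1n.
have nr0 : 0 < nr by lra.
have pD : forall x y, nr `^ (x + y) = nr `^ x * nr `^ y.
  by move=> x y; rewrite powRD //; apply/implyP => _; rewrite gt_eqF.
set a := nr `^ (1 / gamma).
set b := nr `^ (- (p / gamma)).
have a0 : 0 < a by rewrite powR_gt0.
have b0 : 0 < b by rewrite powR_gt0.
set M := a * b.
have M0 : 0 < M by rewrite mulr_gt0.
have hb : b = M / a by rewrite /M mulrC mulKf // gt_eqF.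
set r : R := 2^-1.
have r01 : 0 < r < 1 by rewrite /r; apply/andP; split; [rewrite invr_gt0 | rewrite invf_lt1]; lra.
set K := Num.trunc (M `^ g').
have hK : r ^+ K <= M `^ (- g').
  rewrite /r exprVn powRN lef_pV2 ?posrE ?powR_gt0 ?exprn_gt0 //.
  apply: (le_trans (ltW (truncnS_gt _))); rewrite -natrX ler_nat.
  exact: ltn_expl.
set c := fun k : nat => M * r ^+ k / a.
set s := fun k : nat => if (k < K)%N then M * r ^+ k.+1 else -1.
have r0 : 0 <= r by case/andP: r01 => /ltW.
have c0 : forall k, 0 <= c k.
  move=> k; rewrite /c; apply: mulr_ge0; last by rewrite invr_ge0 ltW.
  by apply: mulr_ge0; [exact: ltW | exact: exprn_ge0].
pose Z := Zf _ _ _ P X K c s.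
have hY : forall j w, Num.min (X j w / a) b <= Z j w.
  move=> j w; rewrite hb min_div //.
  apply: (le_trans (@Y_le_Z R (X j w) a M r K a0 (ltW M0) r01 (X0 j w))).
  rewrite /Z /Zf; apply: ler_sum => k _; rewrite le_eqVlt; apply/orP; left.
  apply/eqP; congr (_ * _); symmetry; exact: ind_bool.
have hS0 : forall w, 0 <= \sum_(1 <= j < n.+1) Num.min (X j w / a) b.
  move=> w; apply: sumr_ge0 => j _; rewrite le_min divr_ge0 ?X0 ?(ltW a0) ?(ltW b0) //.
apply: (@le_trans _ _ ('E_P[(fun w => (\sum_(j <- index_iota 1 n.+1) Z j w) ^+ 2)%R])%E).
  rewrite unlock; apply: ge0_le_integral => //.
  - by move=> w _; rewrite lee_fin sqr_ge0.
  - apply/measurable_EFinP; apply: measurable_funX; apply: measurable_sum => j.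
    apply: (@measurable_minr _ _ _ _ (fun w => X j w / a) (cst b)) => //.
    by apply: measurable_funM.
  - apply/measurable_EFinP; apply: measurable_funX; apply: measurable_sum => j.
    exact: mZ.
  - move=> w _; rewrite lee_fin; have h0 := hS0 w.
    have h1 := ler_sum (index_iota 1 n.+1) (fun j _ => hY j w).
    by rewrite expr2 [leRHS]expr2 ler_pM.
set Bz := \sum_(k < K.+1) c k.
set U := Uf _ _ _ P X K c s.
rewrite (E_sum _ _ _ P X K c s _ c0).
apply: (@le_trans _ _ (\sum_(i <- index_iota 1 n.+1) \sum_(j <- index_iota 1 n.+1)
   (((i == j)%:R * (Bz * U) + U ^+ 2)%:E))%E).
  apply: lee_sum => i _; apply: lee_sum => j _.
  have [<-|ij] := eqVneq i j.
    apply: (le_trans (E_diag _ _ _ P X K c s i hid c0)).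
    by rewrite lee_fin mul1r lerDl sqr_ge0.
  by rewrite (E_off _ _ _ P X K c s i j hind hid ij c0) lee_fin mul0r add0r.
under eq_bigr do rewrite sumEFin.
rewrite sumEFin sum_eval lee_fin.
have hBz : Bz <= 2 * b.
  have -> : Bz = M / a * \sum_(k < K.+1) r ^+ k.
    by rewrite /Bz mulr_sumr; apply: eq_bigr => k _; rewrite /c mulrAC.
  rewrite hb mulrC ler_pM2r; last by rewrite divr_gt0.
  have -> : (2 : R) = (1 - r)^-1 by rewrite /r; field.
  by apply: geom_le; rewrite r0 /=; case/andP: r01.
have hU0 : 0 <= U by apply: sumr_ge0 => k _; rewrite mulr_ge0 // pr_ge0.
set V := M * M `^ (- g') / a.
have hV0 : 0 <= V by rewrite /V !mulr_ge0 ?powR_ge0 ?invr_ge0 ?(ltW M0) ?(ltW a0).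
have hU : U <= D * V.
  apply: (@U_bound R a M C0 g' K
    (fun k => fine (P (X 0%N @^-1` [set y | s k < y]))) a0 M0 C0pos g'01 hK).
    by move=> k; rewrite pr_ge0 pr_le1 //; exact: mset.
  move=> k hk.
  have sk0 : 0 < s k by rewrite /s hk mulr_gt0 // exprn_gt0 //; case/andP: r01.
  by move: (HC (s k) sk0); rewrite /F /s hk.
set E0 := - (p * (1 / gamma - 1)).
set e := 1 + (1 / gamma + - (p / gamma)) + (1 / gamma + - (p / gamma)) * (- g') + - (1 / gamma).
have hW : nr * V = nr `^ e.
  rewrite /V /M /a /b -pD -powRrM -powRN.
  rewrite -[X in X * _ = _](powRr1 (ltW nr0)) -!pD.
  by congr (_ `^ _); rewrite /e; ring.
have ee : e = E0 + (1 - p) * (dl / gamma).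
  by rewrite /e /E0 /g'; field; rewrite gt_eqF.
have dlg' : dl / gamma <= eps / 2.
  rewrite ler_pdivrMr //.
  by have -> : eps / 2 * gamma = eps * gamma / 2 by ring.
have dlg0 : 0 <= dl / gamma by rewrite divr_ge0 // ltW.
have he : e <= E0 + eps / 2.
  have hp1 : 1 - p <= 1 by rewrite gerBl ltW.
  by rewrite ee lerD2l; apply: le_trans dlg'; apply: ler_piMl.
have hig : 1 <= 1 / gamma by rewrite ler_pdivlMr // mul1r ltW.
have hE0 : E0 <= 0.
  by rewrite /E0 oppr_le0 mulr_ge0 ?subr_ge0 // ltW.
set Zn := nr `^ (E0 + eps).
have hWZ : nr * V <= Zn.
  by rewrite hW /Zn; apply: ler_powR => //; apply: aux1 he.
have hW2 : (nr * V) ^+ 2 <= Zn.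
  by rewrite hW expr2 -pD /Zn; apply: ler_powR => //; apply: aux2 he hE0.
have hb1 : b <= 1.
  rewrite /b -(powRr0 nr); apply: ler_powR => //.
  by rewrite oppr_le0 divr_ge0 // ltW.
have Bz0 : 0 <= Bz by apply: sumr_ge0 => k _; exact: c0.
have D0' : 0 <= D by exact: ltW.
have nV0 : 0 <= nr * V by rewrite mulr_ge0 // ltW.
have t1 : nr * (Bz * U) <= 2 * D * Zn.
  apply: (@le_trans _ _ (nr * ((2 * b) * (D * V)))).
    by rewrite ler_wpM2l ?(ltW nr0) // ler_pM.
  have -> : nr * (2 * b * (D * V)) = 2 * D * b * (nr * V) by ring.
  apply: (@le_trans _ _ (2 * D * 1 * (nr * V))).
    by rewrite ler_wpM2r // ler_wpM2l // mulr_ge0.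
  by rewrite mulr1 ler_wpM2l // mulr_ge0.
have t2 : (nr * U) ^+ 2 <= D ^+ 2 * Zn.
  have h : nr * U <= D * (nr * V) by rewrite mulrCA ler_wpM2l ?(ltW nr0).
  apply: (@le_trans _ _ ((D * (nr * V)) ^+ 2)).
    by rewrite expr2 [leRHS]expr2 ler_pM // mulr_ge0 // ltW.
  by rewrite exprMn ler_wpM2l // exprn_ge0.
have -> : (Bz * U + U ^+ 2 *+ n) *+ n = nr * (Bz * U) + (nr * U) ^+ 2.
  by rewrite -(mulr_natr _ n) -(mulr_natr (U ^+ 2) n) /nr; ring.
by rewrite mulrDl; exact: lerD t1 t2.
Qed.
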